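(* Let $G$ be a connected, simple, undirected graph with infinitely many vertices. Then for every integer $\ell\geq 2$, every $\{\ell\}$-resolving set of $G$ is infinite (i.e. $\beta_\ell(G)=\infty$), and for every integer $\ell\geq 1$, every $\ell$-solid-resolving set of $G$ is infinite (i.e. $\beta_\ell^s(G)=\infty$).
   Context: $d$ is the shortest-path distance; for nonempty $X\subseteq V(G)$, $d(s,X)=\min_{x\in X}d(s,x)$; for $S\subseteq V(G)$, $\mathcal{D}_S(X)$ is the family $(d(s,X))_{s\in S}$. $S$ is an $\{\ell\}$-resolving set if $\mathcal{D}_S(X)\neq\mathcal{D}_S(Y)$ for all distinct nonempty $X,Y\subseteq V(G)$ with $|X|\leq\ell$, $|Y|\leq\ell$; $S$ is an $\ell$-solid-resolving set if $\mathcal{D}_S(X)\neq\mathcal{D}_S(Y)$ for all distinct nonempty $X,Y\subseteq V(G)$ with $|X|\leq \ell$ ($Y$ arbitrary). $\beta_\ell(G)$ and $\beta_\ell^s(G)$ denote the minimum cardinalities of such sets. *)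

(* Defs.v *)
From Stdlib Require Import Arith List.

Section Graphs.
Variable V : Type.
Variable adj : V -> V -> Prop.

Definition simple_graph : Prop :=
  (forall x y, adj x y -> adj y x) /\ (forall x, ~ adj x x).

Definition walk (n : nat) (x y : V) : Prop :=
  exists f : nat -> V, f 0 = x /\ f n = y /\
    forall i, i < n -> adj (f i) (f (S i)).

Definition connected : Prop := forall x y, exists n, walk n x y.

Definition dist_is (x y : V) (n : nat) : Prop :=
  walk n x y /\ forall m, walk m x y -> n <= m.

Definition finite_set (A : V -> Prop) : Prop :=
  exists l : list V, forall x, A x -> In x l.

Definition infinite_graph : Prop := ~ finite_set (fun _ => True).

Definition card_le (A : V -> Prop) (k : nat) : Prop :=
  exists l : list V, length l <= k /\ forall x, A x -> In x l.

Definition nonempty (A : V -> Prop) : Prop := exists x, A x.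

Definition same_set (A B : V -> Prop) : Prop := forall x, A x <-> B x.

Definition dist_set_is (s : V) (X : V -> Prop) (n : nat) : Prop :=
  (exists x, X x /\ dist_is s x n) /\
  (forall x m, X x -> dist_is s x m -> n <= m).

Definition same_dist_vectors (S X Y : V -> Prop) : Prop :=
  forall s, S s -> forall n, dist_set_is s X n <-> dist_set_is s Y n.

Definition l_resolving (l : nat) (S : V -> Prop) : Prop :=
  forall X Y : V -> Prop, nonempty X -> nonempty Y ->
    card_le X l -> card_le Y l -> ~ same_set X Y ->
    ~ same_dist_vectors S X Y.

Definition l_solid_resolving (l : nat) (S : V -> Prop) : Prop :=
  forall X Y : V -> Prop, nonempty X -> nonempty Y ->
    card_le X l -> ~ same_set X Y ->
    ~ same_dist_vectors S X Y.

End Graphs.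

(* Main.v *)
Require Import Defs.
From Stdlib Require Import Arith List Lia Classical ClassicalEpsilon.

Section Aux.
Variable V : Type.
Variable adj : V -> V -> Prop.

Lemma min_exists (P : nat -> Prop) :
  (exists n, P n) -> exists n, P n /\ forall m, P m -> n <= m.
Proof.
  intros [n Hn].
  apply NNPP; intro H.
  assert (forall k, forall m, m <= k -> ~ P m).
  { induction k; intros m Hm Pm.
    - apply H; exists m; split; auto; intros; lia.
    - destruct (Nat.eq_dec m (S k)).
      + subst. apply H; exists (S k); split; auto.
        intros m' Pm'. destruct (le_lt_dec (S k) m'); auto.
        exfalso; apply (IHk m'); auto; lia.
      + apply (IHk m); auto; lia. }
  apply (H0 n n); auto.
Qed.

Definition d (x y : V) : nat := epsilon (inhabits 0) (fun n => dist_is V adj x y n).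

Hypothesis conn : connected V adj.

Lemma d_spec x y : dist_is V adj x y (d x y).
Proof.
  unfold d. apply epsilon_spec.
  destruct (conn x y) as [n Hn].
  destruct (min_exists (fun n => walk V adj n x y)) as [m [Hm1 Hm2]]; eauto.
  exists m; split; auto.
Qed.

Lemma d_uniq x y n : dist_is V adj x y n -> n = d x y.
Proof.
  intros [H1 H2]. destruct (d_spec x y) as [H3 H4].
  specialize (H2 _ H3). specialize (H4 _ H1). lia.
Qed.

Lemma finite_sub (A B : V -> Prop) :
  (forall x, A x -> B x) -> finite_set V B -> finite_set V A.
Proof. intros H [l Hl]. exists l; auto. Qed.

Lemma inf_nonempty (A : V -> Prop) : ~ finite_set V A -> exists x, A x.
Proof.
  intro H. apply NNPP; intro H'. apply H. exists nil.
  intros x Ax. apply H'; eauto.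
Qed.

Lemma levels_finite (A : V -> Prop) (f : V -> nat) :
  (forall n, finite_set V (fun y => A y /\ f y = n)) ->
  forall N, finite_set V (fun y => A y /\ f y < N).
Proof.
  intros H N. induction N.
  - exists nil. intros x [_ Hx]; lia.
  - destruct IHN as [l1 H1]. destruct (H N) as [l2 H2].
    exists (l1 ++ l2). intros x [Ax Hx]. apply in_or_app.
    destruct (Nat.eq_dec (f x) N); [right; apply H2 | left; apply H1]; split; auto; lia.
Qed.

Lemma dickson (lS : list V) : forall (A : V -> Prop), ~ finite_set V A ->
  exists x, A x /\ ~ finite_set V (fun y => A y /\ forall s, In s lS -> d s x <= d s y).
Proof.
  induction lS as [|s lS IH]; intros A HA.
  - destruct (inf_nonempty A HA) as [x Ax]. exists x; split; auto.
    intro F; apply HA. revert F; apply finite_sub. intros y Ay; split; auto.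
    intros s [].
  - destruct (classic (exists n, ~ finite_set V (fun y => A y /\ d s y = n))) as [[n Hn]|Hn].
    + destruct (IH _ Hn) as [x [Ax0 Hx]]; destruct Ax0 as [Ax Ex]. exists x; split; auto.
      intro F; apply Hx. revert F; apply finite_sub.
      intros y [[Ay Ey] Hy]. split; [auto|].
      intros s' [<-|Hs']; [lia | auto].
    + assert (Hl : forall n, finite_set V (fun y => A y /\ d s y = n)).
      { intro n. apply NNPP; intro C. apply Hn; eauto. }
      destruct (IH _ HA) as [x [Ax Hx]]. exists x; split; auto.
      intros [lR HR].
      destruct (levels_finite A (d s) Hl (d s x)) as [lL HL].
      apply Hx. exists (lR ++ lL). intros y [Ay Hy]. apply in_or_app.
      destruct (le_lt_dec (d s x) (d s y)).
      * left. apply HR. split; auto. intros s' [<-|Hs']; auto.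
      * right. apply HL. auto.
Qed.

Lemma key (S : V -> Prop) : infinite_graph V -> finite_set V S ->
  exists x y, x <> y /\ same_dist_vectors V adj S (fun z => z = x) (fun z => z = x \/ z = y).
Proof.
  intros Hinf [lS HS].
  destruct (dickson lS (fun _ => True) Hinf) as [x [_ Hx]].
  assert (exists y, y <> x /\ forall s, In s lS -> d s x <= d s y) as [y [Hyx Hy]].
  { apply NNPP; intro C. apply Hx. exists (x :: nil).
    intros y [_ Hy]. left. apply NNPP; intro C'. apply C. exists y; split; auto. }
  exists x, y; split; auto.
  intros s Ss n. specialize (Hy s (HS s Ss)).
  assert (Hsx := d_spec s x). assert (Hsy := d_spec s y).
  split; intros [[z [Hz1 Hz2]] H2].
  - split.
    + exists x; split; auto. subst z; auto.
    + intros w m [->| ->] Hw; apply d_uniq in Hw; subst z; apply d_uniq in Hz2; subst; lia.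
  - assert (n = d s x).
    { destruct Hz1 as [->| ->]; apply d_uniq in Hz2; subst; auto.
      specialize (H2 x (d s x) (or_introl eq_refl) Hsx). lia. }
    subst n. split.
    + exists x; split; auto.
    + intros w m -> Hw. apply d_uniq in Hw; lia.
Qed.

End Aux.

Theorem mainTheorem7 (V : Type) (adj : V -> V -> Prop) :
  simple_graph V adj -> connected V adj -> infinite_graph V ->
  (forall (l : nat), 2 <= l -> forall S : V -> Prop,
      l_resolving V adj l S -> ~ finite_set V S) /\
  (forall (l : nat), 1 <= l -> forall S : V -> Prop,
      l_solid_resolving V adj l S -> ~ finite_set V S).
Proof.
  intros _ Hc Hinf. split.
  - intros l Hl S HR HF.
    destruct (key V adj Hc S Hinf HF) as [x [y [Hxy Hsd]]].
    apply (HR (fun z => z = x) (fun z => z = x \/ z = y)).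
    + exists x; auto.
    + exists x; auto.
    + exists (x :: nil); simpl; split; [lia|]. intros z ->; auto.
    + exists (x :: y :: nil); simpl; split; [lia|]. intros z [-> | ->]; auto.
    + intro E. apply Hxy. symmetry. apply (proj2 (E y)). auto.
    + auto.
  - intros l Hl S HR HF.
    destruct (key V adj Hc S Hinf HF) as [x [y [Hxy Hsd]]].
    apply (HR (fun z => z = x) (fun z => z = x \/ z = y)).
    + exists x; auto.
    + exists x; auto.
    + exists (x :: nil); simpl; split; [lia|]. intros z ->; auto.
    + intro E. apply Hxy. symmetry. apply (proj2 (E y)). auto.
    + auto.
Qed.
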